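(* Let $L$ be one of the Lie algebras $\mathcal{L}$, $\mathrm{Vir}$, $\widetilde{\mathcal{W}}$, $\mathcal{W}$ (defined in the context), with its $\mathbb{Z}$-gradation $L=\bigoplus_{i} L_i$, and for $k\in\mathbb{Z}$ put $L^{(k)}=\sum_{i\ge k}L_i$. Let $V$ be a simple $L$-module. Then the following conditions are equivalent: (a) $V$ satisfies Condition A: for every $v\in V$ there is a positive integer $n$ such that $L_i v=0$ for all $i\ge n$; (b) there exist $0\ne v\in V$ and $s\in\mathbb{N}$ such that $L^{(s)}v=0$; (c) there exists $k\in\mathbb{N}$ such that $V$ is a locally finite $L^{(k)}$-module (every $v\in V$ lies in a finite-dimensional $L^{(k)}$-submodule); (d) there exists $m\in\mathbb{N}$ such that $V$ is a locally nilpotent $L^{(m)}$-module (for every $v\in V$ there is $n\in\mathbb{N}$ with $a_1a_2\cdots a_n v=0$ for all $a_1,\dots,a_n\in L^{(m)}$).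
   Context: $\mathbb{N}$ denotes the positive integers. The twisted Heisenberg–Virasoro algebra $\mathcal{L}$ has basis $\{d_n,I_n,z_1,z_2,z_3\mid n\in\mathbb{Z}\}$ (where $d_n=t^{n+1}\frac{d}{dt}$, $I_n=t^n$) with brackets $[d_n,d_m]=(m-n)d_{m+n}+\delta_{n,-m}\frac{n^3-n}{12}z_1$, $[d_n,I_m]=mI_{m+n}+\delta_{n,-m}(n^2+n)z_2$, $[I_n,I_m]=n\delta_{n,-m}z_3$, and $z_1,z_2,z_3$ central. Its gradation is $\mathcal{L}_n=\mathbb{C}d_n+\mathbb{C}I_n$ for $n\neq0$ and $\mathcal{L}_0=\mathbb{C}d_0+\mathbb{C}I_0+\mathbb{C}z_1+\mathbb{C}z_2+\mathbb{C}z_3$. $\mathrm{Vir}$ is the subalgebra spanned by $\{d_i,z_1\mid i\in\mathbb{Z}\}$; $\widetilde{\mathcal{W}}=\mathbb{C}[t]\frac{d}{dt}+\mathbb{C}[t]$ is the subalgebra spanned by $\{d_i\,(i\ge -1),\ I_i\,(i\ge 0)\}$; $\mathcal{W}=\mathrm{Der}(\mathbb{C}[t])$ is spanned by $\{d_i\mid i\ge -1\}$. Each is graded by giving $d_i,I_i$ degree $i$ and $z_j$ degree $0$. *)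

(* Defs.v *)
From mathcomp Require Import all_boot all_algebra complex.
From mathcomp Require Import reals.
Set Implicit Arguments. Unset Strict Implicit. Unset Printing Implicit Defensive.
Import GRing.Theory Num.Theory.
Local Open Scope ring_scope.

(* Basis of the twisted Heisenberg-Virasoro algebra:
   Bd n = d_n, BI n = I_n, Bz1 = z_1, Bz2 = z_2, Bz3 = z_3. *)
Inductive LB : Type := Bd of int | BI of int | Bz1 | Bz2 | Bz3.

Inductive LieAlg : Type := HVir (* \mathcal{L} *) | Vir | Wtilde | Wder (* \mathcal{W} *).

Definition inL (L : LieAlg) (b : LB) : bool :=
  match L, b with
  | HVir, _ => true
  | Vir, Bd _ => true
  | Vir, Bz1 => true
  | Vir, _ => false
  | Wtilde, Bd n => (-1 <= n)%R
  | Wtilde, BI n => (0 <= n)%R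
  | Wtilde, _ => false
  | Wder, Bd n => (-1 <= n)%R
  | Wder, _ => false
  end.

Definition deg (b : LB) : int :=
  match b with Bd n => n | BI n => n | _ => 0 end.

(* An element of the Lie algebra, written as a finite formal linear
   combination  sum c_j b_j  of basis vectors. *)
Definition elt (F : fieldType) := seq (F * LB).

Definition bracket (F : fieldType) (b1 b2 : LB) : elt F :=
  match b1, b2 with
  | Bd n, Bd m => ((m - n)%:~R, Bd (n + m)) ::
                  (if n == - m then [:: ((n ^+ 3 - n)%:~R / 12%:R, Bz1)] else [::])
  | Bd n, BI m => (m%:~R, BI (m + n)) ::
                  (if n == - m then [:: ((n ^+ 2 + n)%:~R, Bz2)] else [::])
  | BI m, Bd n => (- m%:~R, BI (m + n)) ::
                  (if n == - m then [:: (- (n ^+ 2 + n)%:~R, Bz2)] else [::])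
  | BI n, BI m => if n == - m then [:: (n%:~R, Bz3)] else [::]
  | _, _ => [::]
  end.

Section Modules.
Variables (F : fieldType) (V : lmodType F) (rho : LB -> {linear V -> V}).

Definition act (a : elt F) (v : V) : V := \sum_(p <- a) p.1 *: rho p.2 v.

Definition is_rep (L : LieAlg) : Prop :=
  forall b1 b2, inL L b1 -> inL L b2 -> forall v : V,
    rho b1 (rho b2 v) - rho b2 (rho b1 v) = act (bracket F b1 b2) v.

Definition in_alg (L : LieAlg) (a : elt F) : bool := all (fun p => inL L p.2) a.
Definition in_graded (L : LieAlg) (i : int) (a : elt F) : bool :=
  all (fun p => inL L p.2 && (deg p.2 == i)) a.
Definition in_filt (L : LieAlg) (k : int) (a : elt F) : bool :=
  all (fun p => inL L p.2 && (k <= deg p.2)) a.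

Definition submodule (L : LieAlg) (W : V -> Prop) : Prop :=
  [/\ W 0, (forall x y, W x -> W y -> W (x + y)),
      (forall (c : F) x, W x -> W (c *: x)) &
      (forall a x, in_alg L a -> W x -> W (act a x))].

Definition simple_mod (L : LieAlg) : Prop :=
  (exists v : V, v != 0) /\
  forall W, submodule L W -> (forall x, W x -> x = 0) \/ (forall x, W x).

Definition in_span (s : seq V) (w : V) : Prop :=
  exists c : 'I_(size s) -> F, w = \sum_(i < size s) c i *: s`_i.

Definition condA (L : LieAlg) : Prop :=
  forall v : V, exists n : nat, (0 < n)%N /\
    forall (i : int) (a : elt F), (n%:Z <= i) -> in_graded L i a -> act a v = 0.

Definition condB (L : LieAlg) : Prop :=
  exists (v : V) (s : nat), [/\ v != 0, (0 < s)%N &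
    forall a, in_filt L s%:Z a -> act a v = 0].

Definition condC (L : LieAlg) : Prop :=
  exists k : nat, (0 < k)%N /\
    forall v : V, exists s : seq V, in_span s v /\
      forall a w, in_filt L k%:Z a -> in_span s w -> in_span s (act a w).

Definition condD (L : LieAlg) : Prop :=
  exists m : nat, (0 < m)%N /\
    forall v : V, exists n : nat, (0 < n)%N /\
      forall as_ : seq (elt F), size as_ = n -> all (in_filt L m%:Z) as_ ->
        foldr act v as_ = 0.

End Modules.

(* Main.v *)
From HB Require Import structures.
Require Import Defs.
From mathcomp Require Import all_boot all_algebra complex.
From mathcomp Require Import reals.
From mathcomp Require Import zify ring lra.
From Stdlib Require Import ClassicalEpsilon Classical.
Set Implicit Arguments. Unset Strict Implicit. Unset Printing Implicit Defensive.
Import GRing.Theory Num.Theory.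
Local Open Scope ring_scope.

Definition eqLB (a b : LB) : bool :=
  match a, b with
  | Bd n, Bd m => n == m | BI n, BI m => n == m
  | Bz1, Bz1 => true | Bz2, Bz2 => true | Bz3, Bz3 => true | _, _ => false end.
Lemma eqLBP : Equality.axiom eqLB.
Proof.
by case=> [n|n|||] [m|m|||] /=; try (by constructor);
  apply: (iffP eqP) => [->|[]].
Qed.
HB.instance Definition _ := hasDecEq.Build LB eqLBP.

Lemma bracket_deg (F : fieldType) b1 b2 :
  all (fun p => deg p.2 == deg b1 + deg b2) (bracket F b1 b2).
Proof.
case: b1 => [n|n|||]; case: b2 => [m|m|||] //=.
all: rewrite ?andbT; try (case: ifP => /eqP H //=; rewrite ?andbT).
all: try (apply/andP; split); apply/eqP; lia.
Qed.

Lemma bracket_inL (F : numFieldType) L b1 b2 : inL L b1 -> inL L b2 ->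
  all (fun p => (p.1 == 0) || inL L p.2) (bracket F b1 b2).
Proof.
case: L; case: b1 => [n|n|||]; case: b2 => [m|m|||] //=.
all: rewrite ?orbT ?andbT //.
all: try (case: ifP => /eqP H //=; rewrite ?orbT ?andbT ?orbF).
all: move=> h1 h2; rewrite ?mulf_eq0 ?invr_eq0 ?oppr_eq0 ?intr_eq0 ?pnatr_eq0 ?orbF.
all: rewrite ?exprS ?expr0 ?mulr1; try done; try lia.
all: apply/andP; split; try lia.
- have : n = -1 \/ n = 0 \/ n = 1 by lia.
  by case=> [en|[en|en]]; rewrite en; lia.
- have : n = -1 \/ n = 0 \/ n = 1 by lia.
  by case=> [en|[en|en]]; rewrite en; lia.
- have : m = -1 \/ m = 0 by lia.
  by case=> [en|en]; rewrite en; lia.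
- have : n = -1 \/ n = 0 \/ n = 1 by lia.
  by case=> [en|[en|en]]; rewrite en; lia.
Qed.

Section Gen.
Variables (F : numFieldType) (V : lmodType F) (rho : LB -> {linear V -> V}).
Variable (L : LieAlg).
Hypothesis Hrep : is_rep rho L.

Lemma act_nil v : act rho [::] v = 0.
Proof. by rewrite /act big_nil. Qed.
Lemma act_cons p a v : act rho (p :: a) v = p.1 *: rho p.2 v + act rho a v.
Proof. by rewrite /act big_cons. Qed.
Lemma act1 b v : act rho [:: (1, b)] v = rho b v.
Proof. by rewrite act_cons act_nil addr0 scale1r. Qed.
Lemma act0 a : act rho a 0 = 0.
Proof. by elim: a => [|p a IH]; rewrite ?act_nil // act_cons IH linear0 scaler0 addr0. Qed.
Lemma actD a x y : act rho a (x + y) = act rho a x + act rho a y.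
Proof.
elim: a => [|p a IH]; rewrite ?act_nil ?addr0 // !act_cons IH linearD scalerDr.
by rewrite -!addrA; congr (_ + _); rewrite addrCA.
Qed.
Lemma actZ a c x : act rho a (c *: x) = c *: act rho a x.
Proof.
elim: a => [|p a IH]; rewrite ?act_nil ?scaler0 // !act_cons IH linearZ scalerDr.
by rewrite !scalerA mulrC.
Qed.
Lemma act_sum (I : Type) (r : seq I) (g : I -> V) a :
  act rho a (\sum_(i <- r) g i) = \sum_(i <- r) act rho a (g i).
Proof.
elim: r => [|i r IH]; rewrite ?big_nil ?act0 // !big_cons actD IH //.
Qed.

Lemma sum_all0 (T : Type) (P : pred T) (G : T -> V) (r : seq T) :
  all P r -> (forall x, P x -> G x = 0) -> \sum_(x <- r) G x = 0.
Proof.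
elim: r => [|x r IH] /=; first by rewrite big_nil.
by move=> /andP[Px Pr] H; rewrite big_cons H // IH // add0r.
Qed.

Lemma rho_sum b (I : Type) (r : seq I) (g : I -> V) :
  rho b (\sum_(i <- r) g i) = \sum_(i <- r) rho b (g i).
Proof. exact: linear_sum. Qed.

Definition wordv (u : seq LB) (z : V) : V := foldr (fun b z => rho b z) z u.

Lemma wordv_cat u1 u2 z : wordv (u1 ++ u2) z = wordv u1 (wordv u2 z).
Proof. by rewrite /wordv foldr_cat. Qed.
Lemma wordv0 u : wordv u 0 = 0.
Proof. by elim: u => //= b u ->; rewrite linear0. Qed.
Lemma wordvD u x y : wordv u (x + y) = wordv u x + wordv u y.
Proof. by elim: u => //= b u ->; rewrite linearD. Qed.
Lemma wordvZ u c x : wordv u (c *: x) = c *: wordv u x.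
Proof. by elim: u => //= b u ->; rewrite linearZ. Qed.
Lemma wordv_sum u (I : Type) (r : seq I) (g : I -> V) :
  wordv u (\sum_(i <- r) g i) = \sum_(i <- r) wordv u (g i).
Proof.
elim: r => [|i r IH]; rewrite ?big_nil ?wordv0 // !big_cons wordvD IH //.
Qed.

End Gen.

Section Span.
Variables (F : fieldType) (V : lmodType F).
Implicit Types (S : seq V).

Lemma span0 S : in_span S 0.
Proof. by exists (fun _ => 0); rewrite big1 // => i _; rewrite scale0r. Qed.

Lemma spanD S x y : in_span S x -> in_span S y -> in_span S (x + y).
Proof.
move=> [c1 ->] [c2 ->]; exists (fun i => c1 i + c2 i).
by rewrite -big_split; apply: eq_bigr => i _; rewrite scalerDl.
Qed.

Lemma spanZ S a x : in_span S x -> in_span S (a *: x).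
Proof.
move=> [c ->]; exists (fun i => a * c i).
by rewrite scaler_sumr; apply: eq_bigr => i _; rewrite scalerA.
Qed.

Lemma span_nth S j : (j < size S)%N -> in_span S S`_j.
Proof.
move=> Hj; exists (fun i : 'I_(size S) => ((i : nat) == j)%:R).
rewrite (bigD1 (Ordinal Hj)) //= eqxx scale1r big1 ?addr0 // => i Hi.
suff -> : ((i : nat) == j) = false by rewrite scale0r.
by apply/negbTE; apply: contra Hi => /eqP Hij; apply/eqP; apply: val_inj.
Qed.

Lemma span_sum S (I : Type) (r : seq I) (g : I -> V) :
  (forall i, in_span S (g i)) -> in_span S (\sum_(i <- r) g i).
Proof.
move=> H; elim: r => [|i r IH]; first by rewrite big_nil; apply: span0.
by rewrite big_cons; apply: spanD.
Qed.

Lemma span_sum_all S (I : Type) (P : pred I) (r : seq I) (g : I -> V) :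
  all P r -> (forall i, P i -> in_span S (g i)) -> in_span S (\sum_(i <- r) g i).
Proof.
move=> + H; elim: r => [|i r IH] /=; first by move=> _; rewrite big_nil; apply: span0.
by move=> /andP[Pi Pr]; rewrite big_cons; apply: spanD; [apply: H|apply: IH].
Qed.

Lemma span_lin S (g : V -> V) :
  (forall x y, g (x + y) = g x + g y) -> (forall a x, g (a *: x) = a *: g x) ->
  (forall j, (j < size S)%N -> in_span S (g S`_j)) ->
  forall w, in_span S w -> in_span S (g w).
Proof.
move=> gD gZ H w [c ->].
have g0 : g 0 = 0 by have := gZ 0 0; rewrite !scale0r.
have -> : g (\sum_(i < size S) c i *: S`_i) = \sum_(i < size S) c i *: g S`_i.
  have gs : forall (r : seq 'I_(size S)) (h : 'I_(size S) -> V),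
      g (\sum_(i <- r) h i) = \sum_(i <- r) g (h i).
    by move=> r h; elim: r => [|i r IH]; rewrite ?big_nil ?g0 // !big_cons gD IH.
  by rewrite gs; apply: eq_bigr => i _; rewrite gZ.
by apply: span_sum => i; apply: spanZ; apply: H.
Qed.

End Span.

Lemma all_and (T : Type) (P Q : pred T) r :
  all P r -> all Q r -> all (fun x => P x && Q x) r.
Proof. by elim: r => //= x r IH /andP[-> /IH H] /andP[-> /H]. Qed.

Lemma split_has (T : Type) (P : pred T) (u : seq T) :
  has P u -> exists pre b post, u = pre ++ b :: post /\ P b.
Proof.
elim: u => //= x u IH /orP[Px|/IH [pre [b [post [-> Pb]]]]].
- by exists [::], x, u.
- by exists (x :: pre), b, post.
Qed.

Fixpoint allwords (A : seq LB) (n : nat) : seq (seq LB) :=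
  if n is n'.+1 then [::] :: [seq b :: u | b <- A, u <- allwords A n'] else [:: [::]].

Lemma allwords_mem A n u : (size u <= n)%N -> all (mem A) u -> u \in allwords A n.
Proof.
elim: n u => [|n IH] [|b u] //=; rewrite ?inE ?eqxx //.
move=> Hs /andP[Hb Hu]; apply/orP; right; apply: allpairs_f => //; exact: IH.
Qed.

Lemma allwords_all A n :
  all (fun u => (size u <= n)%N && all (mem A) u) (allwords A n).
Proof.
elim: n => [|n IH] //=.
apply/allP => w /allpairsP [[b u] [/= Hb Hu ->]].
by move/allP: IH => /(_ u Hu) /andP[H1 H2] /=; rewrite ltnS H1 Hb H2.
Qed.

Lemma allwords_head A n : nth [::] (allwords A n) 0 = [::].
Proof. by case: n. Qed.

Section QZ.
Variables (F : numFieldType) (V : lmodType F) (rho : LB -> {linear V -> V}).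
Variable (L : LieAlg).
Hypothesis Hrep : is_rep rho L.
Variables (v0 : V) (s : nat).
Hypothesis s_gt0 : (0 < s)%N.
Hypothesis Hv0 : forall a, in_filt L s%:Z a -> act rho a v0 = 0.

Definition f (b : LB) : int := deg b - s%:Z + 1.
Definition fsum (u : seq LB) : int := \sum_(b <- u) f b.
Lemma fsum_cat u1 u2 : fsum (u1 ++ u2) = fsum u1 + fsum u2.
Proof. by rewrite /fsum big_cat. Qed.
Lemma fsum_cons b u : fsum (b :: u) = f b + fsum u.
Proof. by rewrite /fsum big_cons. Qed.
Lemma fsum_nil : fsum [::] = 0.
Proof. by rewrite /fsum big_nil. Qed.

Lemma kill_v0 b : inL L b -> s%:Z <= deg b -> rho b v0 = 0.
Proof. by move=> Hb Hd; rewrite -act1 Hv0 //= Hb Hd. Qed.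

Lemma fsum_le0 u : ~~ has (fun b => 0 < f b) u -> fsum u <= 0.
Proof.
elim: u => [|b u IH] /=; first by rewrite fsum_nil.
rewrite negb_or => /andP[Hb /IH] H; rewrite fsum_cons.
lia.
Qed.

Lemma Qlem n : forall u, (size u <= n)%N -> all (inL L) u -> 0 < fsum u ->
  wordv rho u v0 = 0.
Proof.
elim: n => [|n IHn] u.
  by case: u => // _ _; rewrite fsum_nil.
move=> Hs Hin Hpos.
have [pre0 [b [post0 [Eu Hb]]]] : exists pre b post, u = pre ++ b :: post /\ 0 < f b.
  apply: split_has; apply: contraT => H; have := fsum_le0 H; lia.
suff R : forall post pre, all (inL L) (pre ++ b :: post) ->
    (size (pre ++ b :: post) <= n.+1)%N -> 0 < fsum (pre ++ b :: post) ->
    wordv rho pre (rho b (wordv rho post v0)) = 0.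
  by rewrite Eu wordv_cat /=; apply: R; rewrite -Eu.
elim=> [|x post IHp] pre Hin' Hs' Hpos'.
  move: Hin'; rewrite all_cat /= => /and3P[_ Hbl _].
  rewrite /= kill_v0 ?wordv0 //; move: Hb; rewrite /f; lia.
move: (Hin'); rewrite all_cat /= => /and4P[Hpre Hbl Hxl Hpost].
rewrite /=; have := Hrep Hbl Hxl (wordv rho post v0).
move/eqP; rewrite subr_eq => /eqP ->.
rewrite wordvD.
rewrite (_ : wordv rho pre (rho x (rho b _)) =
   wordv rho (pre ++ [:: x]) (rho b (wordv rho post v0))); last by rewrite wordv_cat.
rewrite IHp ?add0r; first last.
- by move: Hpos'; rewrite !fsum_cat !fsum_cons fsum_nil; lia.
- by move: Hs'; rewrite !size_cat /=; lia.
- by rewrite -catA all_cat /= Hpre Hxl Hbl Hpost.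
rewrite /act wordv_sum.
have hh := (all_and (bracket_inL F Hbl Hxl) (bracket_deg F b x)).
rewrite addr0; apply: sum_all0; first exact: hh.
move=> p /andP[/orP[/eqP->|Hp] /eqP Hd]; rewrite wordvZ ?scale0r //.
rewrite -[rho p.2 _]/(wordv rho [:: p.2] (wordv rho post v0)) -!wordv_cat -catA /=.
rewrite IHn ?scaler0 //.
- by move: Hs'; rewrite !size_cat /=; lia.
- by rewrite all_cat /= Hpre Hp Hpost.
- move: Hpos'; rewrite !fsum_cat !fsum_cons /f Hd; lia.
Qed.


Definition Zc (c : int) (z : V) : Prop := exists ws : seq (F * seq LB),
  z = \sum_(p <- ws) p.1 *: wordv rho p.2 v0 /\
  all (fun p => all (inL L) p.2 && (c <= fsum p.2)) ws.

Lemma Z_pos c z : 0 < c -> Zc c z -> z = 0.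
Proof.
move=> Hc [ws [-> Hall]]; apply: sum_all0; first exact: Hall.
move=> p /andP[Hin Hf]; rewrite (@Qlem (size p.2)) ?scaler0 //; lia.
Qed.

Lemma Z0 c : Zc c 0.
Proof. by exists [::]; rewrite big_nil. Qed.

Lemma ZD c x y : Zc c x -> Zc c y -> Zc c (x + y).
Proof.
move=> [w1 [-> H1]] [w2 [-> H2]]; exists (w1 ++ w2).
by rewrite big_cat all_cat H1 H2.
Qed.

Lemma ZZ c a x : Zc c x -> Zc c (a *: x).
Proof.
move=> [w [-> H]]; exists [seq (a * p.1, p.2) | p <- w]; split.
  by rewrite big_map scaler_sumr; apply: eq_bigr => p _; rewrite scalerA.
by rewrite all_map.
Qed.

Lemma Zmono c c' x : c' <= c -> Zc c x -> Zc c' x.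
Proof.
move=> Hc [w [-> H]]; exists w; split => //.
elim: w H => //= p w IH /andP[/andP[H1 H2] H3]; rewrite H1 IH //= andbT; lia.
Qed.

Lemma Zrho c b x : inL L b -> Zc c x -> Zc (c + f b) (rho b x).
Proof.
move=> Hb [w [-> H]]; exists [seq (p.1, b :: p.2) | p <- w]; split.
  by rewrite big_map linear_sum; apply: eq_bigr => p _; rewrite linearZ.
rewrite all_map; elim: w H => //= p w IH /andP[/andP[H1 H2] H3].
by rewrite Hb H1 IH // fsum_cons andbT /=; lia.
Qed.

Lemma Zact_filt c a x : in_filt L s%:Z a -> Zc c x -> Zc (c + 1) (act rho a x).
Proof.
move=> Ha Hx; elim: a Ha => [|p a IH] /=; first by rewrite act_nil => _; apply: Z0.
move=> /andP[/andP[Hp Hd] Ha]; rewrite act_cons; apply: ZD; last exact: IH.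
apply: ZZ; apply: (@Zmono (c + f p.2)); first rewrite /f.
  move: Hd. set D := deg p.2. move=> Hd. lia.
exact: (Zrho Hp Hx).
Qed.

Lemma Zact_alg c a x : Defs.in_alg L a -> Zc c x -> exists c', Zc c' (act rho a x).
Proof.
move=> Ha Hx; elim: a Ha => [|p a IH] /=; first by rewrite act_nil => _; exists 0; apply: Z0.
move=> /andP[Hp /IH [c' Hc']]; rewrite act_cons.
exists (Num.min (c + f p.2) c'); apply: ZD.
  apply: ZZ; apply: (@Zmono (c + f p.2)); first lia.
  exact: Zrho.
by apply: (Zmono _ Hc'); lia.
Qed.

Lemma Zv0 : Zc 0 v0.
Proof.
exists [:: (1, [::])]; rewrite big_seq1 scale1r /= fsum_nil; split => //.
Qed.

Lemma Z_all : v0 != 0 -> simple_mod rho L -> forall z, exists c, Zc c z.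
Proof.
move=> Hv0nz [_ Hs] z.
have Hsub : submodule rho L (fun z => exists c, Zc c z).
  split.
  + by exists 0; apply: Z0.
  + by move=> x y [c1 H1] [c2 H2]; exists (Num.min c1 c2); apply: ZD;
      [apply: (Zmono _ H1)|apply: (Zmono _ H2)]; lia.
  + by move=> a x [c H]; exists c; apply: ZZ.
  + by move=> a x Ha [c H]; apply: (Zact_alg Ha H).
have [H0|Hall] := Hs _ Hsub; last exact: Hall.
by have := H0 v0 (ex_intro _ 0 Zv0); move/eqP: Hv0nz.
Qed.


Lemma B_to_A : v0 != 0 -> simple_mod rho L -> condA rho L.
Proof.
move=> Hnz Hs v; have [c Hc] := Z_all Hnz Hs v.
exists (`|s%:Z - c|%N.+1); split => // i a Hi Ha.
rewrite /act; apply: sum_all0; first exact: Ha.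
move=> p /andP[Hp /eqP Hd].
rewrite (Z_pos _ (Zrho Hp Hc)) ?scaler0 //; rewrite /f Hd; lia.
Qed.

Lemma B_to_D : v0 != 0 -> simple_mod rho L -> condD rho L.
Proof.
move=> Hnz Hs; exists s; split => // v; have [c Hc] := Z_all Hnz Hs v.
exists (`|c|%N.+1); split => // as_ Hsz Hall.
have : Zc (c + (size as_)%:Z) (foldr (act rho) v as_).
  elim: as_ Hall {Hsz} => /= [_|a as_ IH /andP[Ha Hrest]]; first by rewrite addr0.
  by apply: (Zmono _ (Zact_filt Ha (IH Hrest))); lia.
by move/Z_pos; apply; rewrite Hsz; lia.
Qed.

Lemma Zword c u x : all (inL L) u -> Zc c x -> Zc (c + fsum u) (wordv rho u x).
Proof.
elim: u c => [|b u IH] c /=; first by rewrite fsum_nil addr0.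
move=> /andP[Hb Hu] Hx; have := Zrho Hb (IH c Hu Hx).
by apply: Zmono; rewrite fsum_cons; lia.
Qed.

Lemma fsum_ge u : all (fun b => s%:Z <= deg b) u -> (size u)%:Z <= fsum u.
Proof.
elim: u => [|b u IH] /=; first by rewrite fsum_nil.
move=> /andP[Hb /IH Hu]; rewrite fsum_cons /f; lia.
Qed.

Definition Alph (l : nat) : seq LB := filter (inL L)
  ([seq Bd (s%:Z + i%:Z) | i <- iota 0 l] ++ [seq BI (s%:Z + i%:Z) | i <- iota 0 l]).

Lemma Alph_prop l b : b \in Alph l -> inL L b && (s%:Z <= deg b).
Proof.
rewrite mem_filter => /andP[-> ]; rewrite mem_cat => /orP[] /mapP[i _ ->] /=; lia.
Qed.

Lemma mem_Alph l b : inL L b -> s%:Z <= deg b -> deg b < s%:Z + l%:Z -> b \in Alph l.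
Proof.
case: b => [n|n|||] /= Hb H1 H2; try lia; rewrite mem_filter Hb mem_cat /=; apply/orP;
  [left|right]; apply/mapP; exists `|n - s%:Z|%N; rewrite ?mem_iota; try lia;
  congr (_ _); lia.
Qed.

Lemma B_to_C : v0 != 0 -> simple_mod rho L -> condC rho L.
Proof.
move=> Hnz Hs; exists s; split => // v.
have [c Hc] := Z_all Hnz Hs v.
set l := `|c|%N.
set W := allwords (Alph l) l.
have HW0 : (0 < size W)%N by rewrite /W; case: (l).
exists [seq wordv rho u v | u <- W]; split.
  have H0 : [seq wordv rho u v | u <- W]`_0 = v.
    by rewrite (nth_map [::]) // /W allwords_head.
  rewrite -[X in in_span _ X]H0.
  by apply: span_nth; rewrite size_map.
move=> a w Ha; apply: span_lin; [exact: actD|exact: actZ|].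
move=> j; rewrite size_map => Hj; rewrite (nth_map [::]) //.
set u := nth [::] W j.
have Hu : u \in W by apply: mem_nth.
have /andP[Hsz Hmem] := allP (allwords_all (Alph l) l) u Hu.
rewrite /act; apply: span_sum_all; first exact: Ha.
move=> p /andP[Hp Hd]; apply: spanZ.
case: (boolP ((p.2 \in Alph l) && (size u < l)%N)) => [/andP[Hb Hsu]|Hno].
  have Hbu : (p.2 :: u) \in W by apply: allwords_mem => //=; rewrite Hb Hmem.
  have -> : rho p.2 (wordv rho u v) = [seq wordv rho u v | u <- W]`_(index (p.2 :: u) W).
    by rewrite (nth_map [::]) ?index_mem // nth_index.
  by apply: span_nth; rewrite size_map index_mem.
have Hal : all (fun b => inL L b && (s%:Z <= deg b)) u.
  by apply: sub_all Hmem => b /Alph_prop.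
have Hul : all (inL L) (p.2 :: u).
  by rewrite /= Hp; apply: sub_all Hal => b /andP[].
have Hge : (size u)%:Z <= fsum u.
  by apply: fsum_ge; apply: sub_all Hal => b /andP[].
have -> : rho p.2 (wordv rho u v) = 0; last exact: span0.
apply: (Z_pos _ (Zword Hul Hc)); rewrite fsum_cons /f.
move: Hno; rewrite negb_and => /orP[Hnot|Hlt].
  have : ~~ (deg p.2 < s%:Z + l%:Z) by apply: contra Hnot; exact: mem_Alph.
  rewrite /l; lia.
rewrite /l in Hlt; lia.
Qed.

End QZ.

Lemma count_split (T : eqType) (a : pred T) p (r : seq T) :
  count a r = count (fun i => a i && (i == p)) r + count (fun i => a i && (i != p)) r.
Proof.
elim: r => //= x r ->; case: (a x); case: (x == p) => /=; lia.
Qed.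

Lemma count_iota_pick (a : pred nat) p n : a p -> (p < n)%N ->
  count a (iota 0 n) = (count (fun i => a i && (i != p)) (iota 0 n)).+1.
Proof.
move=> Hp Hpn; rewrite (count_split a p).
suff -> : count (fun i => a i && (i == p)) (iota 0 n) = 1 by [].
rewrite (eq_count (a2 := pred1 p)); first by rewrite (count_uniq_mem _ (iota_uniq 0 n)) mem_iota /= Hpn.
by move=> i /=; case: eqP => [->|]; rewrite ?Hp ?andbF.
Qed.

Lemma inL_Bd L n : -1 <= n -> inL L (Bd n).
Proof. by case: L. Qed.

Section CA.
Variables (F : numFieldType) (V : lmodType F) (rho : LB -> {linear V -> V}).
Variable (L : LieAlg).
Hypothesis Hrep : is_rep rho L.
Variables (S : seq V) (k : nat).
Hypothesis k_gt0 : (0 < k)%N.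
Hypothesis Hst : forall a w, in_filt L k%:Z a -> in_span S w -> in_span S (act rho a w).

Definition Kill (g : V -> V) := forall w, in_span S w -> g w = 0.

Lemma Stab b w : inL L b -> k%:Z <= deg b -> in_span S w -> in_span S (rho b w).
Proof. by move=> Hb Hd Hw; rewrite -act1; apply: Hst => //=; rewrite Hb Hd. Qed.

Lemma kill_br y b : inL L y -> inL L b -> k%:Z <= deg y -> Kill (rho b) ->
  Kill (act rho (bracket F y b)).
Proof.
move=> Hy Hb Hd HK w Hw; rewrite -(Hrep Hy Hb) HK // linear0 HK ?subrr //.
exact: Stab.
Qed.

Lemma red t : forall (b0 : int) (c : nat -> F) (n : nat), k%:Z <= b0 ->
  count (fun i => c i != 0) (iota 0 n) = t.+1 ->
  Kill (fun w => \sum_(i < n) c i *: rho (Bd (b0 + i%:Z)) w) ->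
  exists l, k%:Z <= l /\ Kill (rho (Bd l)).
Proof.
elim: t => [|t IH] b0 c n Hb0 Hcnt HK.
  have : has (fun i => c i != 0) (iota 0 n) by rewrite has_count Hcnt.
  move=> /hasP[p]; rewrite mem_iota add0n /= => Hpn Hcp.
  move: Hcnt; rewrite (count_iota_pick (a := fun i => c i != 0) Hcp Hpn) => -[] /eqP.
  rewrite -leqn0 leqNgt -has_count => /hasPn Hz.
  exists (b0 + p%:Z); split; first lia.
  move=> w Hw; have := HK w Hw.
  rewrite (bigD1 (Ordinal Hpn)) //= big1 ?addr0.
    by move/eqP; rewrite scaler_eq0 (negbTE Hcp) /= => /eqP.
  move=> i Hi; have := Hz i; rewrite mem_iota /= ltn_ord => /(_ isT).
  rewrite negb_and !negbK => /orP[/eqP->|]; first by rewrite scale0r.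
  by move=> /eqP Hip; move: Hi; rewrite (_ : i = Ordinal Hpn) ?eqxx //; apply: val_inj.
have : has (fun i => c i != 0) (iota 0 n) by rewrite has_count Hcnt.
move=> /hasP[p]; rewrite mem_iota add0n /= => Hpn Hcp.
pose c' := fun i : nat => c i * (i%:Z - p%:Z)%:~R.
apply: (IH (b0 + b0 + p%:Z) c' n); first lia.
  move: Hcnt; rewrite (count_iota_pick (a := fun i => c i != 0) Hcp Hpn) => -[] <-.
  apply: eq_count => i; rewrite /c' mulf_eq0 intr_eq0 subr_eq0 negb_or.
  by congr (_ && _); rewrite eqz_nat.
set y := Bd (b0 + p%:Z).
have Hy : inL L y by apply: inL_Bd; lia.
move=> w Hw.
have -> : \sum_(i < n) c' i *: rho (Bd (b0 + b0 + p%:Z + i%:Z)) w =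
   rho y (\sum_(i < n) c i *: rho (Bd (b0 + i%:Z)) w) -
   \sum_(i < n) c i *: rho (Bd (b0 + i%:Z)) (rho y w).
  rewrite linear_sum -sumrB; apply: eq_bigr => i _.
  have Hbi : inL L (Bd (b0 + i%:Z)) by apply: inL_Bd; lia.
  rewrite linearZ -scalerBr (Hrep Hy Hbi) /= ifF; last by apply/eqP; lia.
  rewrite act_cons act_nil addr0 scalerA /c'.
  congr (_ *: rho (Bd _) w); first by congr (_ * _%:~R); lia.
  lia.
rewrite HK // (HK (rho y w)); last by apply: Stab => //=; lia.
by rewrite linear0 subr0.
Qed.

Lemma from_l l v : k%:Z <= l -> Kill (rho (Bd l)) -> in_span S v ->
  exists n : nat, (0 < n)%N /\
    forall (i : int) a, n%:Z <= i -> in_graded L i a -> act rho a v = 0.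
Proof.
move=> Hl HK Hv.
have Hb : inL L (Bd l) by apply: inL_Bd; lia.
have KBd : forall j, 2 * l + 1 <= j -> Kill (rho (Bd j)).
  move=> j Hj w Hw.
  have Hy : inL L (Bd (j - l)) by apply: inL_Bd; lia.
  have := kill_br Hy Hb _ HK Hw; rewrite /= ifF; last by apply/eqP; lia.
  rewrite act_cons act_nil addr0 => /(_ ltac:(lia)) /eqP.
  rewrite scaler_eq0 intr_eq0 => /orP[/eqP|/eqP]; first lia.
  by rewrite addrC subrK.
have KBI : forall j, l + k%:Z <= j -> inL L (BI j) -> Kill (rho (BI j)).
  move=> j Hj HI w Hw.
  have Hy : inL L (BI (j - l)) by move: HI; case: (L) => //=; lia.
  have := kill_br Hy Hb _ HK Hw; rewrite /= ifF; last by apply/eqP; lia.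
  rewrite act_cons act_nil addr0 => /(_ ltac:(lia)) /eqP.
  rewrite scaler_eq0 oppr_eq0 intr_eq0 => /orP[/eqP|/eqP]; first lia.
  by rewrite subrK.
exists (absz (2 * l + 1)); split; first lia.
move=> i a Hi Ha; rewrite /act; apply: sum_all0; first exact: Ha.
move=> [c b] /andP[/= Hbl /eqP Hd]; apply/eqP; rewrite scaler_eq0; apply/orP; right.
apply/eqP; case: b Hbl Hd => [j|j|||] /= Hbl Hd.
- by apply: KBd => //; lia.
- by apply: KBI => //; lia.
all: lia.
Qed.

Lemma dep : exists (c : nat -> F) (n : nat),
  count (fun i => c i != 0) (iota 0 n) != 0%N /\
  Kill (fun w => \sum_(i < n) c i *: rho (Bd (k%:Z + i%:Z)) w).
Proof.
set m := size S; set N0 := (m * m).+1.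
have Hcoef : forall (t : 'I_N0) (j : 'I_m), exists cc : 'I_m -> F,
    rho (Bd (k%:Z + t%:Z)) S`_j = \sum_(i < m) cc i *: S`_i.
  move=> t j; apply: Stab => /=; [apply: inL_Bd; lia | lia | exact: span_nth].
pose CC t j := proj1_sig (constructive_indefinite_description _ (Hcoef t j)).
have HCC : forall (t : 'I_N0) (j : 'I_m), rho (Bd (k%:Z + t%:Z)) S`_j = \sum_(i < m) CC t j i *: S`_i.
  by move=> t j; rewrite (proj2_sig (constructive_indefinite_description _ (Hcoef t j))).
pose M (t : 'I_N0) : 'M[F]_m := \matrix_(i, j) CC t j i.
pose A : 'M[F]_(N0, m * m) := \matrix_(t, q) mxvec (M t) 0 q.
have Hker : kermx A != 0.
  rewrite -mxrank_eq0 mxrank_ker; have := rank_leq_col A; rewrite /N0; lia.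
have [t0 [q0 Hq0]] : exists t0 q0, kermx A t0 q0 != 0.
  apply: NNPP => H; move/eqP: Hker => Hker; apply: Hker; apply/matrixP => i j; rewrite [in RHS]mxE.
  by apply/eqP; apply: contraT => Hij; case: H; exists i, j.
pose u := row t0 (kermx A).
have Hu : u *m A = 0 by rewrite -row_mul mulmx_ker row0.
have Hsum : forall i j, \sum_(t < N0) u 0 t * CC t j i = 0.
  move=> i j; have := congr1 (fun B : 'M[F]_(1, m * m) => B 0 (mxvec_index i j)) Hu.
  rewrite !mxE => H; rewrite -[X in _ = X]H; apply: eq_bigr => t _; rewrite !mxE.
  by congr (_ * _); rewrite (mxvecE (M t)) mxE.
exists (fun i => u 0 (inord i)), N0; split.
  rewrite -lt0n -has_count; apply/hasP; exists (val q0).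
    by rewrite mem_iota add0n /=.
  by rewrite inord_val /u mxE.
move=> w [d ->].
have -> : \sum_(t < N0) u 0 (inord t) *: rho (Bd (k%:Z + t%:Z)) (\sum_(j < m) d j *: S`_j)
  = \sum_(t < N0) \sum_(j < m) \sum_(i < m) (u 0 t * (d j * CC t j i)) *: S`_i.
  apply: eq_bigr => t _; rewrite inord_val linear_sum (scaler_sumr (u 0 t)).
  apply: eq_bigr => j _; rewrite linearZ HCC scalerA (scaler_sumr (u 0 t * d j)).
  by apply: eq_bigr => i _; rewrite !scalerA mulrA.
rewrite exchange_big /=.
under eq_bigr => j _ do rewrite exchange_big /=.
rewrite exchange_big /=.
apply: big1 => i _; apply: big1 => j _.
rewrite -scaler_suml.
suff -> : \sum_(t < N0) u 0 t * (d j * CC t j i) = 0 by rewrite scale0r.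
transitivity (d j * \sum_(t < N0) u 0 t * CC t j i); last by rewrite Hsum mulr0.
rewrite mulr_sumr.
by apply: eq_bigr => t _; rewrite mulrCA.
Qed.

Lemma C_kill : exists l, k%:Z <= l /\ Kill (rho (Bd l)).
Proof.
have [c [n [Hc HK]]] := dep.
case En : (count (fun i => c i != 0) (iota 0 n)) Hc => [//|t] _.
apply: (@red t k%:Z c n _ En HK); lia.
Qed.

End CA.

Lemma A_to_B (F : numFieldType) (V : lmodType F) (rho : LB -> {linear V -> V}) L :
  simple_mod rho L -> condA rho L -> condB rho L.
Proof.
move=> [[v Hv] _] HA; have [n [Hn Hk]] := HA v.
exists v, n; split => // a; elim: a => [|p a IH] /=; first by move=> _; rewrite act_nil.
move=> /andP[/andP[Hp Hd] Ha]; rewrite act_cons IH // addr0 -act1.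
by rewrite (Hk (deg p.2)) ?scaler0 //= Hp eqxx.
Qed.

Lemma D_to_B (F : numFieldType) (V : lmodType F) (rho : LB -> {linear V -> V}) L :
  simple_mod rho L -> condD rho L -> condB rho L.
Proof.
move=> [[v Hv] _] [m [Hm HD]]; have [n [Hn Hk]] := HD v.
pose P t := exists as_, [/\ size as_ = t, all (in_filt L m%:Z) as_ &
  foldr (act rho) v as_ != 0].
have [t [[as_ [Hsz Hall Hnz]] HnP]] : exists t, P t /\ ~ P t.+1.
  apply: NNPP => Hno.
  have Hall : forall t, P t.
    elim=> [|t IH]; first by exists [::].
    by apply: NNPP => H; apply: Hno; exists t.
  have [as_ [Hsz Hall' Hnz]] := Hall n.
  by move/eqP: Hnz; apply; apply: Hk.
exists (foldr (act rho) v as_), m; split => // a Ha.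
apply: NNPP => H; apply: HnP; exists (a :: as_); split => /=.
- by rewrite Hsz.
- by rewrite Ha.
- by apply/eqP.
Qed.

Lemma C_to_A (F : numFieldType) (V : lmodType F) (rho : LB -> {linear V -> V}) L :
  is_rep rho L -> condC rho L -> condA rho L.
Proof.
move=> Hrep [k [Hk HC]] v; have [S [Hv Hst]] := HC v.
have [l [Hl HK]] := C_kill Hrep Hk Hst.
exact: (from_l Hrep Hk Hst Hl HK Hv).
Qed.

Theorem lemma1 (R : realType) (L : LieAlg) (V : lmodType R[i])
  (rho : LB -> {linear V -> V})
  (Hrep : is_rep rho L) (Hsimple : simple_mod rho L) :
  [<-> condA rho L; condB rho L; condC rho L; condD rho L].
Proof.
have BA : condB rho L -> condA rho L.
  by case=> v0 [s [Hnz Hs Hv0]]; exact: (B_to_A Hrep Hs Hv0 Hnz Hsimple).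
have BC : condB rho L -> condC rho L.
  by case=> v0 [s [Hnz Hs Hv0]]; exact: (B_to_C Hrep Hs Hv0 Hnz Hsimple).
have BD : condB rho L -> condD rho L.
  by case=> v0 [s [Hnz Hs Hv0]]; exact: (B_to_D Hrep Hs Hv0 Hnz Hsimple).
have AB := A_to_B Hsimple.
have DB := D_to_B Hsimple.
have CA := C_to_A Hrep.
tfae.
- exact: AB.
- exact: BC.
- by move=> /CA /AB /BD.
- by move=> /DB /BA.
Qed.
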